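(* Let $k$ be a field. Every nondegenerate variety of representations of Lie algebras over $k$ is an IBN-variety.
   Context: A representation of a Lie algebra over $k$ is a two-sorted algebra ($\Gamma=\{1,2\}$): sort 1 is a Lie algebra $L$ over $k$ (operations $+,0,-$, a unary scalar multiplication by each $\lambda\in k$, and the bracket), sort 2 is a $k$-vector space $V$ (operations $+,0,-$ and a unary scalar multiplication by each $\lambda\in k$), and there is an action $\circ$ of type $(1,2;2)$ which is bilinear and satisfies $[a,b]\circ v=a\circ(b\circ v)-b\circ(a\circ v)$. A variety of representations of Lie algebras is a class of such representations defined by (two-sorted) identities. A two-sorted variety is nondegenerate if neither $x^{(1)}_1=x^{(1)}_2$ nor $x^{(2)}_1=x^{(2)}_2$ is an identity of it. It is an IBN-variety if for any free algebras $F(Y),F(Z)$ of the variety with finite free generating sets $Y=Y^{(1)}\uplus Y^{(2)}$, $Z=Z^{(1)}\uplus Z^{(2)}$ (split by sort), $F(Y)\cong F(Z)$ implies $|Y^{(1)}|=|Z^{(1)}|$ and $|Y^{(2)}|=|Z^{(2)}|$. *)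

(* Defs.v *)
From HB Require Import structures.
From mathcomp Require Import all_boot all_order all_algebra.
Set Implicit Arguments. Unset Strict Implicit. Unset Printing Implicit Defensive.
Import GRing.Theory.
Local Open Scope ring_scope.

(* sort 1: a Lie algebra L over k; sort 2: a k-vector space V;
   action o : L x V -> V, bilinear, with [a,b] o v = a o (b o v) - b o (a o v). *)
Record LieRep (k : fieldType) := {
  repL : lmodType k;
  repV : lmodType k;
  bracket : repL -> repL -> repL;
  action : repL -> repV -> repV;
  bracket_addl : forall a b c, bracket (a + b) c = bracket a c + bracket b c;
  bracket_addr : forall a b c, bracket a (b + c) = bracket a b + bracket a c;
  bracket_scalel : forall (l : k) a b, bracket (l *: a) b = l *: bracket a b;
  bracket_scaler : forall (l : k) a b, bracket a (l *: b) = l *: bracket a b;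
  bracket_alt : forall a, bracket a a = 0;
  bracket_jacobi : forall a b c,
    bracket a (bracket b c) + bracket b (bracket c a) + bracket c (bracket a b) = 0;
  action_addl : forall a b v, action (a + b) v = action a v + action b v;
  action_addr : forall a v w, action a (v + w) = action a v + action a w;
  action_scalel : forall (l : k) a v, action (l *: a) v = l *: action a v;
  action_scaler : forall (l : k) a v, action a (l *: v) = l *: action a v;
  action_bracket : forall a b v,
    action (bracket a b) v = action a (action b v) - action b (action a v)
}.

(* variables x^(1)_i (sort 1) and x^(2)_i (sort 2), i : nat *)
Inductive LTerm (k : fieldType) :=
| LVar of nat
| LZero
| LAdd of LTerm k & LTerm k
| LOpp of LTerm k
| LScale of k & LTerm k
| LBr of LTerm k & LTerm k.

Inductive VTerm (k : fieldType) :=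
| VVar of nat
| VZero
| VAdd of VTerm k & VTerm k
| VOpp of VTerm k
| VScale of k & VTerm k
| VAct of LTerm k & VTerm k.

Arguments LVar {k}. Arguments LZero {k}. Arguments VVar {k}. Arguments VZero {k}.

Fixpoint evalL k (A : LieRep k) (e1 : nat -> repL A) (t : LTerm k) : repL A :=
  match t with
  | LVar i => e1 i
  | LZero => 0
  | LAdd t1 t2 => evalL e1 t1 + evalL e1 t2
  | LOpp t1 => - evalL e1 t1
  | LScale l t1 => l *: evalL e1 t1
  | LBr t1 t2 => @bracket _ A (evalL e1 t1) (evalL e1 t2)
  end.

Fixpoint evalV k (A : LieRep k) (e1 : nat -> repL A) (e2 : nat -> repV A)
    (t : VTerm k) : repV A :=
  match t with
  | VVar i => e2 i
  | VZero => 0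
  | VAdd t1 t2 => evalV e1 e2 t1 + evalV e1 e2 t2
  | VOpp t1 => - evalV e1 e2 t1
  | VScale l t1 => l *: evalV e1 e2 t1
  | VAct s t1 => @action _ A (evalL e1 s) (evalV e1 e2 t1)
  end.

Inductive identity (k : fieldType) :=
| Ident1 of LTerm k & LTerm k
| Ident2 of VTerm k & VTerm k.

Definition satisfies k (A : LieRep k) (i : identity k) : Prop :=
  match i with
  | Ident1 t s => forall e1 : nat -> repL A, evalL e1 t = evalL e1 s
  | Ident2 t s => forall (e1 : nat -> repL A) (e2 : nat -> repV A),
                    evalV e1 e2 t = evalV e1 e2 s
  end.

Definition in_variety k (Sigma : identity k -> Prop) (A : LieRep k) : Prop :=
  forall i, Sigma i -> satisfies A i.

Definition identity_of k (Sigma : identity k -> Prop) (i : identity k) : Prop :=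
  forall A : LieRep k, in_variety Sigma A -> satisfies A i.

Definition nondegenerate_variety k (Sigma : identity k -> Prop) : Prop :=
  ~ identity_of Sigma (Ident1 (LVar 1) (LVar 2)) /\
  ~ identity_of Sigma (Ident2 (VVar 1) (VVar 2)).

Definition is_hom k (A B : LieRep k) (h1 : repL A -> repL B) (h2 : repV A -> repV B)
  : Prop :=
  (h1 0 = 0 /\ (forall a b, h1 (a + b) = h1 a + h1 b) /\ (forall a, h1 (- a) = - h1 a) /\
   (forall (l : k) a, h1 (l *: a) = l *: h1 a) /\
   (forall a b, h1 (@bracket _ A a b) = @bracket _ B (h1 a) (h1 b))) /\
  (h2 0 = 0 /\ (forall v w, h2 (v + w) = h2 v + h2 w) /\ (forall v, h2 (- v) = - h2 v) /\
   (forall (l : k) v, h2 (l *: v) = l *: h2 v)) /\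
  (forall a v, h2 (@action _ A a v) = @action _ B (h1 a) (h2 v)).

Definition isomorphic k (A B : LieRep k) : Prop :=
  exists (h1 : repL A -> repL B) (h2 : repV A -> repV B),
    [/\ is_hom h1 h2, bijective h1 & bijective h2].

(* F is free in the variety Sigma with free generating set Y = Y1 ⊎ Y2, where
   Y1 = {y1 i | i < n1} ⊆ L(F) and Y2 = {y2 j | j < n2} ⊆ V(F) are given by
   injective enumerations (so |Y1| = n1, |Y2| = n2). *)
Definition free_in_variety k (Sigma : identity k -> Prop) (F : LieRep k)
    (n1 n2 : nat) (y1 : 'I_n1 -> repL F) (y2 : 'I_n2 -> repV F) : Prop :=
  [/\ in_variety Sigma F, injective y1, injective y2 &
    forall (A : LieRep k), in_variety Sigma A ->
    forall (f1 : 'I_n1 -> repL A) (f2 : 'I_n2 -> repV A),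
      (exists (h1 : repL F -> repL A) (h2 : repV F -> repV A),
          [/\ is_hom h1 h2, (forall i, h1 (y1 i) = f1 i) & (forall j, h2 (y2 j) = f2 j)]) /\
      (forall (h1 g1 : repL F -> repL A) (h2 g2 : repV F -> repV A),
          is_hom h1 h2 -> is_hom g1 g2 ->
          (forall i, h1 (y1 i) = f1 i) -> (forall j, h2 (y2 j) = f2 j) ->
          (forall i, g1 (y1 i) = f1 i) -> (forall j, g2 (y2 j) = f2 j) ->
          h1 =1 g1 /\ h2 =1 g2)].

Definition IBN_variety k (Sigma : identity k -> Prop) : Prop :=
  forall (F G : LieRep k) (n1 n2 m1 m2 : nat)
         (y1 : 'I_n1 -> repL F) (y2 : 'I_n2 -> repV F)
         (z1 : 'I_m1 -> repL G) (z2 : 'I_m2 -> repV G),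
    free_in_variety Sigma y1 y2 -> free_in_variety Sigma z1 z2 ->
    isomorphic F G -> n1 = m1 /\ n2 = m2.

(* Main.v *)
From HB Require Import structures.
From mathcomp Require Import ring.
From mathcomp Require Import all_boot all_order all_algebra.
From Stdlib Require Import ClassicalEpsilon.
Require Import Defs.
Import GRing.Theory.
Local Open Scope ring_scope.
Set Implicit Arguments. Unset Strict Implicit.

Section S.
Variable k : fieldType.
Definition Tk : LieRep k.
refine (@Build_LieRep k k^o k^o (fun _ _ => 0) (fun _ _ => 0) _ _ _ _ _ _ _ _ _ _ _);
  intros; rewrite ?addr0 ?scaler0 ?subrr //.
Defined.

Lemma evalL_line (A : LieRep k) (a : repL A) (e : nat -> k) t :
  evalL (fun j => e j *: a) t = (@evalL _ Tk e t : k) *: a.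
Proof.
elim: t => [j||t1 IH1 t2 IH2|t IH|l t IH|t1 IH1 t2 IH2] /=.
- by [].
- by rewrite scale0r.
- by rewrite IH1 IH2 scalerDl.
- by rewrite IH scaleNr.
- by rewrite IH scalerA.
- by rewrite IH1 IH2 bracket_scalel bracket_scaler bracket_alt !scaler0 scale0r.
Qed.

Lemma evalL0 (A : LieRep k) t : evalL (fun _ => (0 : repL A)) t = 0.
Proof.
elim: t => [j||t1 IH1 t2 IH2|t IH|l t IH|t1 IH1 t2 IH2] /=.
- by [].
- by [].
- by rewrite IH1 IH2 addr0.
- by rewrite IH oppr0.
- by rewrite IH scaler0.
- by rewrite IH1 IH2 bracket_alt.
Qed.

Lemma action0 (A : LieRep k) (w : repV A) : action 0 w = 0.
Proof. by rewrite -(scale0r (0 : repL A)) action_scalel scale0r. Qed.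

Lemma evalV_line (A : LieRep k) (v : repV A) (e1 : nat -> k) (e2 : nat -> k) t :
  evalV (fun _ => (0 : repL A)) (fun j => e2 j *: v) t = (@evalV _ Tk e1 e2 t : k) *: v.
Proof.
elim: t => [j||t1 IH1 t2 IH2|t IH|l t IH|s t IH] /=.
- by [].
- by rewrite scale0r.
- by rewrite IH1 IH2 scalerDl.
- by rewrite IH scaleNr.
- by rewrite IH scalerA.
- by rewrite evalL0 action0 scale0r.
Qed.

Lemma Tk_in Sigma : nondegenerate_variety Sigma -> in_variety Sigma Tk.
Proof.
case=> nd1 nd2 [t s|t s] Hi /=.
- move=> e; case: (eqVneq (@evalL _ Tk e t) (@evalL _ Tk e s)) => // Hne; exfalso; apply: nd1.
  move=> A HA e1 /=.
  have := HA _ Hi (fun j => (e j : k) *: (e1 1%N - e1 2%N)) => /=.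
  rewrite !evalL_line => /eqP; rewrite -subr_eq0 -scalerBl scaler_eq0 subr_eq0.
  by rewrite (negbTE Hne) /= subr_eq0 => /eqP.
- move=> e1 e2; case: (eqVneq (@evalV _ Tk e1 e2 t) (@evalV _ Tk e1 e2 s)) => // Hne; exfalso; apply: nd2.
  move=> A HA f1 f2 /=.
  have := HA _ Hi (fun _ => 0) (fun j => (e2 j : k) *: (f2 1%N - f2 2%N)) => /=.
  rewrite (evalV_line _ e1) (evalV_line _ e1) => /eqP; rewrite -subr_eq0 -scalerBl scaler_eq0 subr_eq0.
  by rewrite (negbTE Hne) /= subr_eq0 => /eqP.
Qed.

Definition LhomT (A : LieRep k) (h : repL A -> k) :=
  [/\ h 0 = 0, (forall a b, h (a + b) = h a + h b), (forall a, h (- a) = - h a),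
      (forall (l : k) a, h (l *: a) = l * h a) & (forall a b, h (bracket a b) = 0)].
Definition VhomT (A : LieRep k) (h : repV A -> k) :=
  [/\ h 0 = 0, (forall a b, h (a + b) = h a + h b), (forall a, h (- a) = - h a),
      (forall (l : k) a, h (l *: a) = l * h a) & (forall a v, h (action a v) = 0)].

Lemma homTE (A : LieRep k) (h1 : repL A -> k) (h2 : repV A -> k) :
  @is_hom k A Tk h1 h2 <-> LhomT h1 /\ VhomT h2.
Proof.
rewrite /is_hom /LhomT /VhomT /=; split.
- by case=> [[? [? [? [? ?]]]] [[? [? [? ?]]] ?]]; split; split.
- by case=> [[? ? ? ? ?] [? ? ? ? ?]]; do !split.
Qed.

Lemma LhomT_lin (A : LieRep k) c h g : LhomT h -> LhomT g -> @LhomT A (fun x => c * h x + g x).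
Proof.
case=> h0 hD hN hZ hB [g0 gD gN gZ gB]; split.
- by rewrite h0 g0 mulr0 addr0.
- by move=> a b; rewrite hD gD; ring.
- by move=> a; rewrite hN gN; ring.
- by move=> l a; rewrite hZ gZ; ring.
- by move=> a b; rewrite hB gB mulr0 addr0.
Qed.

Lemma VhomT_lin (A : LieRep k) c h g : VhomT h -> VhomT g -> @VhomT A (fun x => c * h x + g x).
Proof.
case=> h0 hD hN hZ hB [g0 gD gN gZ gB]; split.
- by rewrite h0 g0 mulr0 addr0.
- by move=> a b; rewrite hD gD; ring.
- by move=> a; rewrite hN gN; ring.
- by move=> l a; rewrite hZ gZ; ring.
- by move=> a b; rewrite hB gB mulr0 addr0.
Qed.

Lemma LhomT0 (A : LieRep k) : @LhomT A (fun _ => 0).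
Proof. by split=> *; rewrite ?addr0 ?oppr0 ?mulr0. Qed.
Lemma VhomT0 (A : LieRep k) : @VhomT A (fun _ => 0).
Proof. by split=> *; rewrite ?addr0 ?oppr0 ?mulr0. Qed.

Lemma homT_comp (A B : LieRep k) f1 f2 h1 h2 :
  @is_hom k A B f1 f2 -> @is_hom k B Tk h1 h2 -> @is_hom k A Tk (fun x => h1 (f1 x)) (fun x => h2 (f2 x)).
Proof.
move=> [[f0 [fD [fN [fZ fB]]]] [[g0 [gD [gN gZ]]] fA]] /homTE [[h0 hD hN hZ hB] [k0 kD kN kZ kA]].
apply/homTE; split; split=> *;
  rewrite ?f0 ?fD ?fN ?fZ ?fB ?g0 ?gD ?gN ?gZ ?fA ?h0 ?hD ?hN ?hZ ?hB ?k0 ?kD ?kN ?kZ ?kA //.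
Qed.

Lemma iso_sym (A B : LieRep k) : isomorphic A B -> isomorphic B A.
Proof.
case=> h1 [h2 [[[f0 [fD [fN [fZ fB]]]] [[g0 [gD [gN gZ]]] fA]] [g1 h1K g1K] [g2 h2K g2K]]].
have i1 := can_inj h1K; have i2 := can_inj h2K.
exists g1, g2; split; last 2 first.
- by exists h1.
- by exists h2.
split; [|split].
- split; [|split; [|split; [|split]]].
  + by apply: i1; rewrite g1K f0.
  + by move=> a b; apply: i1; rewrite fD !g1K.
  + by move=> a; apply: i1; rewrite fN !g1K.
  + by move=> l a; apply: i1; rewrite fZ !g1K.
  + by move=> a b; apply: i1; rewrite fB !g1K.
- split; [|split; [|split]].
  + by apply: i2; rewrite g2K g0.
  + by move=> a b; apply: i2; rewrite gD !g2K.
  + by move=> a; apply: i2; rewrite gN !g2K.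
  + by move=> l a; apply: i2; rewrite gZ !g2K.
- by move=> a v; apply: i2; rewrite fA g1K !g2K.
Qed.

Lemma inj_lin_le m n (f : 'rV[k]_m -> 'rV[k]_n) :
  (forall (a : k) u w, f (a *: u + w) = a *: f u + f w) ->
  (forall u, f u = 0 -> u = 0) -> (m <= n)%N.
Proof.
move=> fL finj.
pose g : {linear 'rV[k]_m -> 'rV[k]_n} := HB.pack f (GRing.isLinear.Build k _ _ _ f fL).
have: row_free (lin1_mx g).
  apply: inj_row_free => v; rewrite mul_rV_lin1; exact: finj.
rewrite /row_free => /eqP <-; exact: rank_leq_col.
Qed.

Lemma half Sigma (F G : LieRep k) n1 n2 m1 m2
  (y1 : 'I_n1 -> repL F) (y2 : 'I_n2 -> repV F)
  (z1 : 'I_m1 -> repL G) (z2 : 'I_m2 -> repV G) :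
  in_variety Sigma Tk -> free_in_variety Sigma y1 y2 -> free_in_variety Sigma z1 z2 ->
  isomorphic F G -> (m1 <= n1)%N /\ (m2 <= n2)%N.
Proof.
move=> HT [_ _ _ HF] [_ _ _ HG] [p1 [p2 [Hp [q1 pK qK] [q2 p2K q2K]]]].
have ex (f1 : 'I_m1 -> k) (f2 : 'I_m2 -> k) :
    {p : (repL G -> k) * (repV G -> k) | @is_hom k G Tk p.1 p.2 /\
       (forall i, p.1 (z1 i) = f1 i) /\ forall j, p.2 (z2 j) = f2 j}.
  apply: constructive_indefinite_description.
  case: (HG _ HT f1 f2) => [[h1 [h2 [H1 H2 H3]]] _].
  by exists (h1, h2).
split.
- pose P (u : 'rV[k]_m1) : 'rV[k]_n1 :=
    \row_i (sval (ex (fun j => u 0 j) (fun _ => 0))).1 (p1 (y1 i)).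
  apply: (@inj_lin_le _ _ P).
  + move=> a u w; apply/rowP => i; rewrite !mxE.
    case: (ex _ _) => pa [Ha [Ha1 Ha2]] /=.
    case: (ex _ _) => pu [Hu [Hu1 Hu2]] /=.
    case: (ex _ _) => pw [Hw [Hw1 Hw2]] /=.
    have Hg : @is_hom k G Tk (fun x => a * pu.1 x + pw.1 x) (fun x => a * pu.2 x + pw.2 x).
      move/homTE: Hu => [Hu' Hu'']; move/homTE: Hw => [Hw' Hw''].
      by apply/homTE; split; [apply: LhomT_lin | apply: VhomT_lin].
    have [E1 _] := (HG _ HT (fun j => (a *: u + w) 0 j) (fun _ => 0)).2 _ _ _ _ Ha Hg Ha1 Ha2
       (fun j => ltac:(by cbv beta; rewrite Hu1 Hw1 !mxE)) (fun j => ltac:(by cbv beta; rewrite Hu2 Hw2 mulr0 addr0)).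
    by rewrite E1.
  + move=> u /rowP Pu; apply/rowP => i; rewrite mxE.
    have Pu' := fun j => Pu j; rewrite /P in Pu'.
    move: Pu'; case: (ex _ _) => pu [Hu [Hu1 Hu2]] /= Pu'.
    have Hc := homT_comp Hp Hu.
    have Hz : @is_hom k F Tk (fun _ => 0) (fun x => pu.2 (p2 x)).
      by move/homTE: Hc => [_ HV]; apply/homTE; split; [apply: LhomT0|].
    have [E1 _] := (HF _ HT (fun _ => 0) (fun j => pu.2 (p2 (y2 j)))).2 _ _ _ _ Hc Hz
       (fun j => ltac:(by cbv beta; have := Pu' j; rewrite !mxE)) (fun j => erefl) (fun j => erefl) (fun j => erefl).
    by rewrite -Hu1 -(qK (z1 i)) E1.
- pose P (u : 'rV[k]_m2) : 'rV[k]_n2 :=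
    \row_i (sval (ex (fun _ => 0) (fun j => u 0 j))).2 (p2 (y2 i)).
  apply: (@inj_lin_le _ _ P).
  + move=> a u w; apply/rowP => i; rewrite !mxE.
    case: (ex _ _) => pa [Ha [Ha1 Ha2]] /=.
    case: (ex _ _) => pu [Hu [Hu1 Hu2]] /=.
    case: (ex _ _) => pw [Hw [Hw1 Hw2]] /=.
    have Hg : @is_hom k G Tk (fun x => a * pu.1 x + pw.1 x) (fun x => a * pu.2 x + pw.2 x).
      move/homTE: Hu => [Hu' Hu'']; move/homTE: Hw => [Hw' Hw''].
      by apply/homTE; split; [apply: LhomT_lin | apply: VhomT_lin].
    have [_ E2] := (HG _ HT (fun _ => 0) (fun j => (a *: u + w) 0 j)).2 _ _ _ _ Ha Hg Ha1 Ha2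
       (fun j => ltac:(by cbv beta; rewrite Hu1 Hw1 mulr0 addr0)) (fun j => ltac:(by cbv beta; rewrite Hu2 Hw2 !mxE)).
    by rewrite E2.
  + move=> u /rowP Pu; apply/rowP => i; rewrite mxE.
    have Pu' := fun j => Pu j; rewrite /P in Pu'.
    move: Pu'; case: (ex _ _) => pu [Hu [Hu1 Hu2]] /= Pu'.
    have Hc := homT_comp Hp Hu.
    have Hz : @is_hom k F Tk (fun x => pu.1 (p1 x)) (fun _ => 0).
      by move/homTE: Hc => [HL _]; apply/homTE; split; [|apply: VhomT0].
    have [_ E2] := (HF _ HT (fun j => pu.1 (p1 (y1 j))) (fun _ => 0)).2 _ _ _ _ Hc Hz
       (fun j => erefl) (fun j => ltac:(by cbv beta; have := Pu' j; rewrite !mxE)) (fun j => erefl) (fun j => erefl).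
    by rewrite -Hu2 -(q2K (z2 i)) E2.
Qed.
End S.

Theorem mainTheorem19 (k : fieldType) (Sigma : identity k -> Prop) :
  nondegenerate_variety Sigma -> IBN_variety Sigma.
Proof.
move=> nd F G n1 n2 m1 m2 y1 y2 z1 z2 HF HG iso.
have HT := Tk_in nd.
have [a1 a2] := half HT HF HG iso.
have [b1 b2] := half HT HG HF (iso_sym iso).
by split; apply/eqP; rewrite eqn_leq ?a1 ?a2 ?b1 ?b2.
Qed.
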